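(* Let $\omega>0$, $\bar r>0$, $\bar v>0$ and $T>0$ be such that $e^{AT}\begin{bmatrix}-\bar r\\ \bar v\end{bmatrix}=\begin{bmatrix}\bar r\\ \bar v\end{bmatrix}$, where $A=\begin{bmatrix}0&1\\ \omega^2&0\end{bmatrix}$. Consider the hybrid system with state $(x,\tau)$, $x=(x_p,x_v)\in\mathbb R^2$, $\tau\in\mathbb R$, input $u\in\mathbb R$ and $B=\begin{bmatrix}0\\-\omega^2\end{bmatrix}$: flow: $\dot x=Ax+Bu$, $\dot\tau=1$, for $(x,\tau)\in\mathcal C\times[-T,2T]$; jump: $x^+=x+\begin{bmatrix}-2\bar r\\0\end{bmatrix}$, $\tau^+=\tau-T$, for $(x,\tau)\in\mathcal D\times[-T,2T]$, where $\mathcal C=[-\bar r,\bar r]\times\mathbb R$ and $\mathcal D=\{x\in\mathcal C: x_p=\bar r\}$. Define $x_r(\tau)=e^{A\tau}\begin{bmatrix}-\bar r\\ \bar v\end{bmatrix}$, the error $\varepsilon=(\varepsilon_p,\varepsilon_v)=x-x_r(\tau)$, and $\tau_\varepsilon=T-\tau$. Then $\bar v/\omega-\bar r>0$, and whenever a solution of this hybrid system is at a point $(x,\tau)$ with $x\in\mathcal D$, it holds that $$\tau_\varepsilon=\frac1\omega\ln\big(\eta(\varepsilon_p)\big),\qquad \eta(\varepsilon_p):=\frac{\varepsilon_p-\bar r+\sqrt{\varepsilon_p^2-2\bar r\varepsilon_p+(\bar v/\omega)^2}}{\bar v/\omega-\bar r}.$$ Moreover, $\varepsilon_p\mapsto\frac1\omega\ln(\eta(\varepsilon_p))$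 is an extended class $\mathcal K_\infty$ function on $\mathbb R$; equivalently, $\eta(0)=1$, $\eta$ is strictly increasing, $\lim_{\varepsilon_p\to+\infty}\eta(\varepsilon_p)=+\infty$ and $\lim_{\varepsilon_p\to-\infty}\eta(\varepsilon_p)=0$.
   Context: An extended class $\mathcal K_\infty$ function is a function $\mathbb R\to\mathbb R$ that is continuous, strictly increasing, zero at zero, and unbounded both above and below (tends to $+\infty$ at $+\infty$ and to $-\infty$ at $-\infty$). Solutions of the hybrid system are understood in the standard hybrid-time-domain sense (Goebel–Sanfelice–Teel). *)

(* Defs.v *)
From HB Require Import structures.
From mathcomp Require Import all_boot all_order all_algebra.
From mathcomp Require Import all_classical all_reals all_analysis.
Set Implicit Arguments. Unset Strict Implicit. Unset Printing Implicit Defensive.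
Import Order.TTheory GRing.Theory Num.Theory.
Import numFieldNormedType.Exports.
Local Open Scope ring_scope.
Local Open Scope classical_set_scope.

Section Defs.
Variable R : realType.

(* Matrix exponential e^M := sum_k M^k / k!, the limit taken entrywise
   (equivalent to the limit in any norm on the finite-dim space of matrices). *)
Definition expm (n : nat) (M : 'M[R]_n.+1) : 'M[R]_n.+1 :=
  \matrix_(i, j) limn (fun k : nat => (\sum_(l < k) (l`!%:R)^-1 *: M ^+ l) i j).

Definition vec2 (a b : R) : 'cV[R]_2 :=
  \col_(i < 2) (if i == ord0 then a else b).

Definition mat2 (a b c d : R) : 'M[R]_2 :=
  \matrix_(i < 2, j < 2)
    (if i == ord0 then (if j == ord0 then a else b)
                  else (if j == ord0 then c else d)).

Definition xp (x : 'cV[R]_2) : R := x ord0 ord0.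
Definition xv (x : 'cV[R]_2) : R := x (lift ord0 ord0) ord0.

Definition ext_Kinf (f : R -> R) : Prop :=
  continuous f /\
  {homo f : x y / x < y} /\
  f 0 = 0 /\
  (f x @[x --> +oo] --> +oo) /\
  (f x @[x --> -oo] --> -oo).

Definition flowC (rb : R) : set 'cV[R]_2 := [set x | -rb <= xp x <= rb].
Definition jumpD (rb : R) : set 'cV[R]_2 := [set x | flowC rb x /\ xp x = rb].

Definition eta_fun (omega rb vb : R) (e : R) : R :=
  (e - rb + Num.sqrt (e ^+ 2 - 2 * rb * e + (vb / omega) ^+ 2)) / (vb / omega - rb).

End Defs.

(* Main.v *)
Require Import Defs.
From HB Require Import structures.
From mathcomp Require Import all_boot all_order all_algebra.
From mathcomp Require Import all_classical all_reals all_analysis.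
From mathcomp Require Import ring lra.
Import Order.TTheory GRing.Theory Num.Theory.
Import numFieldNormedType.Exports.
Local Open Scope ring_scope.
Local Open Scope classical_set_scope.

Section S.
Variable R : realType.
Definition Pm (w : R) := mat2 (2^-1) ((2*w)^-1) (w/2) (2^-1).
Definition Qm (w : R) := mat2 (2^-1) (-(2*w)^-1) (-(w/2)) (2^-1).

Lemma pow_A (w t : R) (l : nat) : w != 0 ->
  (t *: mat2 0 1 (w^+2) 0)^+l =
  \matrix_(i,j) ((t*w)^+l * Pm w i j + (-(t*w))^+l * Qm w i j).
Proof.
move=> w0; elim: l => [|l IH].
  apply/matrixP => i j; rewrite expr0. rewrite [RHS]mxE. rewrite -[LHS]/((1%:M : 'M[R]_2) i j). rewrite /scalar_mx /Pm /Qm /mat2 !mxE !expr0 !mul1r.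
  case: i => [[|[|//]]] ? ; case: j => [[|[|//]]] ? //=; field; rewrite ?pnatr_eq0 //.
rewrite exprSr IH -mulmxE; apply/matrixP => i j.
rewrite !mxE !big_ord_recr big_ord0 /= !mxE /Pm /Qm /mat2 ?mxE.
case: i => [[|[|//]]] ? ; case: j => [[|[|//]]] ? //=; rewrite !exprS; field; by rewrite ?pnatr_eq0.
Qed.

Lemma expm_A (w t : R) : w != 0 ->
  expm (t *: mat2 0 1 (w^+2) 0) =
  \matrix_(i,j) (expR (t*w) * Pm w i j + expR (-(t*w)) * Qm w i j).
Proof.
move=> w0; apply/matrixP => i j; rewrite /expm !mxE.
have E k : (\sum_(l < k) (l`!%:R)^-1 *: (t *: mat2 0 1 (w^+2) 0) ^+ l) i j =
   series (exp_coeff (t*w)) k * Pm w i j + series (exp_coeff (-(t*w))) k * Qm w i j.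
  rewrite summxE /series /= big_mkord.
  under eq_bigr do rewrite mxE pow_A // mxE.
  rewrite big_mkord !mulr_suml -big_split /=; apply: eq_bigr => l _.
  rewrite /exp_coeff /=; ring.
rewrite (_ : (fun k => _) = fun k => series (exp_coeff (t*w)) k * Pm w i j + series (exp_coeff (-(t*w))) k * Qm w i j); last by apply/funext => k; rewrite E.
have H : (fun k => series (exp_coeff (t*w)) k * Pm w i j + series (exp_coeff (-(t*w))) k * Qm w i j) @ \oo --> (expR (t*w) * Pm w i j + expR (-(t*w)) * Qm w i j).
  apply: cvgD; apply: cvgMl; exact: is_cvg_series_exp_coeff.
by rewrite (cvg_lim _ H) // /Pm /Qm /mat2 !mxE.
Qed.

Lemma xp_expm (w t a b : R) : w != 0 ->
  xp (expm (t *: mat2 0 1 (w^+2) 0) *m vec2 a b) =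
  (expR (t*w) + expR (-(t*w))) / 2 * a + (expR (t*w) - expR (-(t*w))) / (2*w) * b.
Proof.
move=> w0; rewrite expm_A // /xp /vec2 !mxE !big_ord_recr big_ord0 /= !mxE /Pm /Qm /mat2 ?mxE /=.
field; by rewrite ?pnatr_eq0.
Qed.

Lemma xv_expm (w t a b : R) : w != 0 ->
  xv (expm (t *: mat2 0 1 (w^+2) 0) *m vec2 a b) =
  (expR (t*w) - expR (-(t*w))) * w / 2 * a + (expR (t*w) + expR (-(t*w))) / 2 * b.
Proof.
move=> w0; rewrite expm_A // /xv /vec2 !mxE !big_ord_recr big_ord0 /= !mxE /Pm /Qm /mat2 ?mxE /=.
field; by rewrite ?pnatr_eq0.
Qed.

Lemma xpB (x y : 'cV[R]_2) : xp (x - y) = xp x - xp y.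
Proof. by rewrite /xp !mxE. Qed.

Lemma sq_facts (c y : R) : 0 < c ->
  (Num.sqrt (y^+2 + c))^+2 = y^+2 + c /\ `|y| < Num.sqrt (y^+2 + c).
Proof.
move=> c0; split; first by rewrite sqr_sqrtr // addr_ge0 ?sqr_ge0 ?ltW.
rewrite -sqrtr_sqr ltr_sqrt; first by rewrite ltrDl.
have := sqr_ge0 y; lra.
Qed.

Lemma norm_facts (y : R) : y <= `|y| /\ - y <= `|y|.
Proof. by split; [exact: ler_norm | rewrite -normrN; exact: ler_norm]. Qed.

Lemma h_pos (c y : R) : 0 < c -> 0 < y + Num.sqrt (y^+2 + c).
Proof.
move=> c0; have [_ h] := sq_facts c y c0; have [h1 h2] := norm_facts y; lra.
Qed.

Lemma h_ge (c y : R) : 0 < c -> 2 * y <= y + Num.sqrt (y^+2 + c).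
Proof.
move=> c0; have [_ h] := sq_facts c y c0; have [h1 h2] := norm_facts y; lra.
Qed.

Lemma h_mono (c y1 y2 : R) : 0 < c -> y1 < y2 ->
  y1 + Num.sqrt (y1^+2 + c) < y2 + Num.sqrt (y2^+2 + c).
Proof.
move=> c0 y12.
have [e1 h1] := sq_facts c y1 c0; have [e2 h2] := sq_facts c y2 c0.
have [a1 b1] := norm_facts y1; have [a2 b2] := norm_facts y2.
move: e1 e2 h1 h2; set s1 := Num.sqrt _; set s2 := Num.sqrt _ => e1 e2 h1 h2.
rewrite !expr2 in e1 e2.
nra.
Qed.

Lemma h_le (c y : R) : 0 < c -> y < 0 -> y + Num.sqrt (y^+2 + c) <= c / (- 2 * y).
Proof.
move=> c0 y0.
have [e h] := sq_facts c y c0; have [a b] := norm_facts y.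
move: e h; set s := Num.sqrt _ => e h.
rewrite ler_pdivlMr; last lra.
rewrite !expr2 in e; nra.
Qed.
End S.
Lemma cont_poly (R : realType) (a b : R) : continuous (fun x : R => x^+2 - a*x + b).
Proof.
move=> x; apply: cvgD; last exact: cvg_cst.
apply: cvgB; last by apply: cvgMl_tmp; exact: cvg_id.
rewrite expr2; apply: cvgM; exact: cvg_id.
Qed.

Lemma cont_eta (R : realType) (w rb vb : R) : continuous (eta_fun w rb vb).
Proof.
move=> x; rewrite /eta_fun; apply: cvgMr_tmp.
apply: cvgD; first by apply: cvgB; [exact: cvg_id | exact: cvg_cst].
have := @continuous_comp R R R _ (@Num.sqrt R) x (@cont_poly R (2 * rb) ((vb/w)^+2) x) (@sqrt_continuous R _).
by [].
Qed.

Lemma etaE (R : realType) (w rb vb e : R) :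
  eta_fun w rb vb e = ((e - rb) + Num.sqrt ((e-rb)^+2 + ((vb/w)^+2 - rb^+2))) / (vb/w - rb).
Proof. by rewrite /eta_fun; congr (_ / _); congr (_ + Num.sqrt _); ring. Qed.

Theorem proposition1 (R : realType) (omega rb vb T : R) :
  0 < omega -> 0 < rb -> 0 < vb -> 0 < T ->
  expm (T *: mat2 0 1 (omega ^+ 2) 0) *m vec2 (- rb) vb = vec2 rb vb ->
  0 < vb / omega - rb /\
  (forall (x : 'cV[R]_2) (tau : R),
     jumpD rb x -> - T <= tau <= 2 * T ->
     let eps := x - expm (tau *: mat2 0 1 (omega ^+ 2) 0) *m vec2 (- rb) vb in
     T - tau = omega^-1 * ln (eta_fun omega rb vb (xp eps))) /\
  ext_Kinf (fun e : R => omega^-1 * ln (eta_fun omega rb vb e)) /\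
  eta_fun omega rb vb 0 = 1 /\
  {homo eta_fun omega rb vb : a b / a < b} /\
  (eta_fun omega rb vb e @[e --> +oo] --> +oo) /\
  (eta_fun omega rb vb e @[e --> -oo] --> 0).
Proof.
move=> w0 rb0 vb0 T0 H.
have wn0 : omega != 0 by rewrite gt_eqF.
have H1 := congr1 (@xp R) H.
rewrite xp_expm // /xp /vec2 mxE /= expRN in H1.
have E1 : 1 < expR (T * omega) by rewrite expR_gt1 mulr_gt0.
have key : vb / omega * (expR (T*omega) - 1) = rb * (expR (T*omega) + 1).
  have E0 : expR (T*omega) != 0 by rewrite gt_eqF // expR_gt0.
  have : (expR (T*omega) + 1) * (vb / omega * (expR (T*omega) - 1) - rb * (expR (T*omega) + 1)) = 0.
    rewrite -[RHS](mulr0 (2 * expR (T*omega))) -(subrr rb).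
    rewrite -[X in _ = _ * (X - _)]H1.
    by field; rewrite wn0 E0.
  move/eqP; rewrite mulf_eq0 => /orP[|]; first by rewrite gt_eqF //; lra.
  by rewrite subr_eq0 => /eqP.
have al0 : 0 < vb / omega - rb.
  have : (vb / omega - rb) * (expR (T*omega) - 1) = 2 * rb by lra.
  nra.
split => //.
split.
  move=> x tau [_ xr] _ /=.
  rewrite xpB xp_expm // xr expRN.
  have F0 : 0 < expR (tau * omega) by exact: expR_gt0.
  have E0 : 0 < expR (T * omega) by exact: expR_gt0.
  set F := expR (tau * omega) in F0 *; set E := expR (T * omega) in E1 E0 key *.
  set u := vb / omega in key al0 *.
  have Fn0 : F != 0 by rewrite gt_eqF.
  have an0 : u - rb != 0 by rewrite gt_eqF.
  have -> : eta_fun omega rb vb (rb - ((F + F^-1) / 2 * - rb + (F - F^-1) / (2 * omega) * vb)) = E / F.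
    rewrite /eta_fun -/u.
    have sq : (rb - ((F + F^-1) / 2 * - rb + (F - F^-1) / (2 * omega) * vb)) ^+ 2 -
       2 * rb * (rb - ((F + F^-1) / 2 * - rb + (F - F^-1) / (2 * omega) * vb)) + u ^+ 2
       = (((u - rb) * F + (u + rb) / F) / 2) ^+ 2.
      rewrite /u; field; by rewrite wn0 Fn0.
    rewrite sq sqrtr_sqr ger0_norm; last first.
      apply: divr_ge0 => //; apply: addr_ge0; [apply: mulr_ge0 | apply: divr_ge0]; lra.
    rewrite [X in X / _ = _](_ : _ = (u + rb) / F); last first.
      by rewrite /u; field; rewrite Fn0 wn0.
    have -> : u + rb = (u - rb) * E by lra.
    by field; rewrite Fn0 an0.
  rewrite -expRB -mulrBl expRK; field; by rewrite wn0.
set u := vb / omega in al0 *.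
set al := u - rb in al0 *.
have c0 : 0 < u ^+ 2 - rb ^+ 2.
  by rewrite subr_sqr mulr_gt0 // addr_gt0 // divr_gt0.
have etaE' e : eta_fun omega rb vb e =
    ((e - rb) + Num.sqrt ((e-rb)^+2 + (u^+2 - rb^+2))) / al by rewrite etaE.
have eta_pos e : 0 < eta_fun omega rb vb e.
  by rewrite etaE' divr_gt0 // h_pos.
have eta_mono : {homo eta_fun omega rb vb : a b / a < b}.
  move=> a b ab; rewrite !etaE' ltr_pM2r ?invr_gt0 //; apply: h_mono => //; lra.
have eta0 : eta_fun omega rb vb 0 = 1.
  rewrite /eta_fun -/u expr0n /= mulr0 !subr0 !add0r sqrtr_sqr ger0_norm.
    have -> : - rb + u = al by rewrite /al addrC.
    by rewrite divff // gt_eqF.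
  by rewrite divr_ge0 // ltW.
have eta_big e : 2 * (e - rb) / al <= eta_fun omega rb vb e.
  by rewrite etaE' ler_pM2r ?invr_gt0 // h_ge.
have eta_small e : e < rb -> eta_fun omega rb vb e <= (u^+2 - rb^+2) / (- 2 * (e - rb)) / al.
  by move=> er; rewrite etaE' ler_pM2r ?invr_gt0 // h_le // subr_lt0.
have pinf : eta_fun omega rb vb e @[e --> +oo] --> +oo.
  apply/cvgryPge => A.
  exists (rb + A * al / 2); split; first exact: num_real.
  move=> e he; apply: le_trans (eta_big e).
  rewrite ler_pdivlMr //; nra.
have ninf eps : 0 < eps -> \forall e \near -oo, eta_fun omega rb vb e < eps.
  move=> eps0.
  exists (rb - (u^+2 - rb^+2) / (2 * al * eps)); split; first exact: num_real.
  move=> e he.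
  have d0 : 0 < (u^+2 - rb^+2) / (2 * al * eps) by rewrite divr_gt0 // !mulr_gt0.
  have er : e < rb by lra.
  apply: le_lt_trans (eta_small e er) _.
  have : (u^+2 - rb^+2) / (2 * al * eps) < rb - e by lra.
  rewrite ltr_pdivrMr ?mulr_gt0 // => h.
  rewrite ltr_pdivrMr // ltr_pdivrMr; last by lra.
  nra.
have ninf0 : eta_fun omega rb vb e @[e --> -oo] --> 0.
  apply/cvgrPdist_lt => eps eps0.
  apply: filterS (ninf eps eps0) => e he.
  by rewrite sub0r normrN gtr0_norm.
split; last by [].
have winv : 0 < omega^-1 by rewrite invr_gt0.
split.
  move=> x; apply: cvgMl_tmp.
  apply: (continuous_comp (f := eta_fun omega rb vb) (g := @ln R)); last first.
    exact: continuous_ln.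
  exact: cont_eta.
split.
  move=> a b ab; rewrite ltr_pM2l // ltr_ln ?posrE ?eta_pos //; exact: eta_mono.
split; first by rewrite eta0 ln1 mulr0.
split.
  apply/cvgryPge => A.
  move: pinf => /cvgryPge/(_ (expR (A * omega))).
  apply: filterS => e he.
  rewrite -[A in A <= _](mulKf wn0) ler_pM2l // -ler_expR lnK ?posrE ?eta_pos //.
  by rewrite mulrC.
apply/cvgrNyPle => A.
apply: filterS (ninf _ (expR_gt0 (A * omega))) => e he.
rewrite -[A in _ <= A](mulKf wn0) ler_pM2l // -ler_expR lnK ?posrE ?eta_pos //.
by rewrite mulrC ltW.
Qed.
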